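(* Let $X$ be a $k$-variety and $\alpha:\mathbb{G}_a\times X\dashrightarrow X$ a nontrivial rational $\mathbb{G}_a$-action with co-action $\alpha^*:K_X\to K_X(t)$, and let $K_0=K_X^{\mathbb{G}_a}=\{h\in K_X:\alpha^*h=h\}$. Then there exists $s\in K_X$, transcendental over $K_0$, such that $\alpha^*(s)=s+t$ and $K_X=K_0(s)$; consequently $\alpha^*(f(s))=f(s+t)$ for every $f(s)\in K_0(s)=K_X$.
   Context: $k$ is a field of characteristic zero; a $k$-variety is a separated geometrically integral scheme of finite type over $k$, with function field $K_X$; $\mathbb{G}_a=\mathrm{Spec}(k[t])$. A rational $\mathbb{G}_a$-action on $X$ is given by a homomorphism of $k$-fields $\alpha^*:K_X\to K_X(t)$ with image in $\mathcal{O}_{\nu_0}=\{r(t)\in K_X(t):\mathrm{ord}_{t=0}r\ge 0\}$, such that $(\alpha^*\otimes\mathrm{id})\circ\alpha^*$ equals $\alpha^*$ followed by $t\mapsto t+t'$ (as maps $K_X\to K_X(t,t')$, where $\alpha^*\otimes \mathrm{id}$ applies $\alpha^*$ to coefficients of $K_X(t')$ and sends the new variable to $t$), and such that reduction of $\alpha^*$ modulo $t$ is the identity of $K_X$. The action is nontrivial if $\alpha^*\neq$ the inclusion $K_X\subset K_X(t)$. *)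

(* Defs.v *)
From HB Require Import structures.
From mathcomp Require Import all_boot all_order all_algebra.
Set Implicit Arguments. Unset Strict Implicit. Unset Printing Implicit Defensive.
Import Order.TTheory GRing.Theory Num.Theory.
Local Open Scope ring_scope.

Inductive in_gen (K : fieldType) (S : K -> Prop) : K -> Prop :=
  | gen_base x : S x -> in_gen S x
  | gen_0 : in_gen S 0
  | gen_1 : in_gen S 1
  | gen_add x y : in_gen S x -> in_gen S y -> in_gen S (x + y)
  | gen_opp x : in_gen S x -> in_gen S (- x)
  | gen_mul x y : in_gen S x -> in_gen S y -> in_gen S (x * y)
  | gen_inv x : in_gen S x -> in_gen S (x ^-1).

Definition algebraic_over (K : fieldType) (P : K -> Prop) (x : K) : Prop :=
  exists p : {poly K}, p != 0 /\ (forall i, P p`_i) /\ root p x.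

(* K (with structure map iota : k -> K) is the function field of a k-variety,
   i.e. a finitely generated field extension of k in which k is algebraically
   closed (= geometrically integral, since char k = 0 gives separability). *)
Definition is_function_field (k K : fieldType) (iota : {rmorphism k -> K}) : Prop :=
  (exists gens : seq K, forall x, in_gen (fun y => (exists c, y = iota c) \/ y \in gens) x)
  /\ (forall x : K, (exists p : {poly k}, p != 0 /\ root (map_poly iota p) x) ->
        exists c, x = iota c).

Notation "x %:F" := (@FracField.tofrac _ x) : ring_scope.

Notation Kt K := {fraction {poly K}}.
Notation Ktt K := {fraction {poly {fraction {poly K}}}}.

Definition tvar (K : fieldType) : Kt K := ('X : {poly K})%:F.
Definition cst (K : fieldType) (c : K) : Kt K := (c%:P)%:F.

(* t and t' inside K(t,t') = K(t)(t') *)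
Definition tvar1 (K : fieldType) : Ktt K := ((tvar K)%:P)%:F.
Definition tvar2 (K : fieldType) : Ktt K := ('X : {poly Kt K})%:F.
Definition cst2 (K : fieldType) (c : K) : Ktt K := ((cst c)%:P)%:F.

(* alpha* : K -> K(t) is a rational G_a-action on K (as a k-field):
   - k-linear field homomorphism (alpha is an rmorphism),
   - image in the valuation ring O_{nu_0}, reduction mod t is the identity:
     every alpha* h is P/Q with Q(0) <> 0 and P(0)/Q(0) = h,
   - cocycle: (alpha* (x) id) o alpha* = (t |-> t + t') o alpha*, expressed on
     any representative alpha* h = P(t)/Q(t):
       (alpha* (x) id)(P(t')/Q(t')) = P^alpha(t') / Q^alpha(t') and
       (t |-> t+t')(P/Q) = P(t+t')/Q(t+t'). *)
Definition rational_Ga_action (k K : fieldType) (iota : {rmorphism k -> K})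
  (alpha : {rmorphism K -> Kt K}) : Prop :=
  (forall c : k, alpha (iota c) = cst (iota c))
  /\ (forall h : K, exists P Q : {poly K},
        Q.[0] != 0 /\ alpha h = P%:F / Q%:F /\ P.[0] / Q.[0] = h)
  /\ (forall (h : K) (P Q : {poly K}), Q != 0 -> alpha h = P%:F / Q%:F ->
        (map_poly alpha P)%:F / (map_poly alpha Q)%:F
        = (map_poly (@cst2 K) P).[tvar1 K + tvar2 K]
          / (map_poly (@cst2 K) Q).[tvar1 K + tvar2 K]).

Definition nontrivial_action (K : fieldType) (alpha : {rmorphism K -> Kt K}) : Prop :=
  exists h : K, alpha h != cst h.

Definition invariants (K : fieldType) (alpha : {rmorphism K -> Kt K}) (h : K) : Prop :=
  alpha h = cst h.

(* Main.v *)
Require Import Defs.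
From HB Require Import structures.
From mathcomp Require Import all_boot all_order all_algebra.
Import Order.TTheory GRing.Theory Num.Theory.
Local Open Scope ring_scope.

Lemma frac_rep (R : idomainType) (x : {fraction R}) :
  exists n d : R, d != 0 /\ x = n%:F / d%:F.
Proof.
elim/quotW: x => r.
exists (\n_r), (\d_r); split; first exact: denom_ratioP.
unlock FracField.tofrac.
rewrite -[_^-1]/(FracField.inv _) -FracField.pi_inv.
rewrite -[_ * _]/(FracField.mul _ _) -FracField.pi_mul.
apply/eqmodP; rewrite /= FracField.equivfE /FracField.mulf /FracField.invf /=.
by rewrite !numden_Ratio ?mul1r ?oner_neq0 ?denom_ratioP // mulr1 mulrC.
Qed.

Lemma frac_eq (R : idomainType) (A B C D : R) : B != 0 -> D != 0 ->
  (A%:F / B%:F = C%:F / D%:F) <-> A * D = C * B.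
Proof.
move=> hB hD; split.
  move/eqP; rewrite eqr_div ?tofrac_eq0 // -!tofracM tofrac_eq.
  by move/eqP.
by move=> e; apply/eqP; rewrite eqr_div ?tofrac_eq0 // -!tofracM e.
Qed.

Lemma coprime_rep (L : fieldType) (x : {fraction {poly L}}) :
  exists A B : {poly L}, [/\ coprimep A B, B \is monic & x = A%:F / B%:F].
Proof.
have [n [d [dnz ->]]] := @frac_rep _ x.
set g := gcdp n d.
have gnz : g != 0 by rewrite gcdp_eq0 negb_and dnz orbT.
have hn : n = (n %/ g) * g by rewrite divpK // dvdp_gcdl.
have hd : d = (d %/ g) * g by rewrite divpK // dvdp_gcdr.
have d'nz : d %/ g != 0.
  by apply: contraNneq dnz => e; rewrite hd e mul0r.
have cop : coprimep (n %/ g) (d %/ g) by apply: coprimep_div_gcd; rewrite dnz orbT.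
set c := lead_coef (d %/ g).
have cnz : c != 0 by rewrite lead_coef_eq0.
exists (c^-1 *: (n %/ g)), (c^-1 *: (d %/ g)); split.
- by rewrite coprimepZl ?invr_eq0 // coprimepZr ?invr_eq0.
- by apply/monicP; rewrite lead_coefZ mulVf.
- apply/frac_eq => //; first by rewrite scaler_eq0 negb_or invr_eq0 cnz.
  rewrite -scalerAr -scalerAl; congr (_ *: _).
  move: hn hd; set n' := n %/ g; set d' := d %/ g => hn hd.
  by rewrite hn hd mulrAC mulrA.
Qed.

Lemma uniq_rep (L : fieldType) (A B C D : {poly L}) :
  coprimep A B -> coprimep C D -> B \is monic -> D \is monic ->
  A * D = C * B -> A = C /\ B = D.
Proof.
move=> cAB cCD mB mD e.
have h1 : B %| D.
  have cBA : coprimep B A by rewrite coprimep_sym.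
  by rewrite -(Gauss_dvdpl _ cBA) mulrC e dvdp_mull.
have h2 : D %| B.
  have cDC : coprimep D C by rewrite coprimep_sym.
  by rewrite -(Gauss_dvdpl _ cDC) mulrC -e dvdp_mull.
have eBD : B = D by apply/eqP; rewrite -eqp_monic // /eqp h1 h2.
split=> //; move: e; rewrite eBD; apply: mulIf; exact: monic_neq0.
Qed.
Lemma XaddC_size (R : comNzRingType) (c : R) n : size (('X + c%:P) ^+ n) = n.+1.
Proof. by rewrite -[c]opprK polyCN size_exp_XsubC. Qed.

Lemma XaddC_top (R : comNzRingType) (c : R) n : (('X + c%:P) ^+ n)`_n = 1.
Proof.
have /monicP := monic_exp n (monicXaddC c).
by rewrite lead_coefE XaddC_size.
Qed.

Lemma XaddC_sub (R : comNzRingType) (c : R) n :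
  (('X + c%:P) ^+ n.+1)`_n = (n.+1)%:R * c.
Proof.
elim: n => [|n IH]; first by rewrite expr1 coefD coefX coefC /= add0r mul1r.
rewrite exprSr mulrDr coefD coefMX /= coefMC IH XaddC_top.
by rewrite -mulrDl natr1.
Qed.

Lemma coef_comp_XaddC (R : comNzRingType) (Q : {poly R}) m c :
  Q \is monic -> size Q = m.+2 ->
  (Q \Po ('X + c%:P))`_m = Q`_m + (m.+1)%:R * c.
Proof.
move=> mQ sQ; rewrite comp_polyE coef_sum sQ !big_ord_recr /=.
rewrite big1 ?add0r; last first.
  move=> i _; rewrite coefZ [X in _ * X]nth_default ?mulr0 // XaddC_size; exact: ltn_ord.
rewrite !coefZ XaddC_top XaddC_sub mulr1.
have := monicP mQ; rewrite lead_coefE sQ /= => ->; by rewrite mul1r.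
Qed.

Lemma horner_tofracC (L : fieldType) (p q : {poly L}) :
  (map_poly (fun c : L => (c%:P)%:F) p).[q%:F] = (p \Po q)%:F.
Proof.
rewrite -[fun c : L => _]/(@FracField.tofrac _ \o polyC).
rewrite map_poly_comp_id0 ?rmorph0 // horner_map.
by [].
Qed.

Lemma in_gen_horner (K : fieldType) (S : K -> Prop) (p : {poly K}) (s : K) :
  (forall i, S p`_i) -> in_gen (fun y => S y \/ y = s) p.[s].
Proof.
move=> hp; rewrite horner_coef.
apply: (big_ind (in_gen _)); [exact: gen_0 | exact: gen_add |].
move=> i _; apply: gen_mul; first by apply: gen_base; left.
elim: (nat_of_ord i) => [|n IH]; first by rewrite expr0; exact: gen_1.
by rewrite exprS; apply: gen_mul => //; apply: gen_base; right.
Qed.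

Definition cstm (K : fieldType) : {rmorphism K -> Kt K} :=
  (@FracField.tofrac {poly K} \o polyC)%FUN.

Lemma cstE (K : fieldType) (c : K) : cst c = cstm K c.
Proof. by []. Qed.

Lemma map_cstE (K : fieldType) (p : {poly K}) : map_poly (@cst K) p = map_poly (cstm K) p.
Proof. by apply: eq_map_poly. Qed.

Lemma shiftX (L : comNzRingType) (a b : L) :
  ('X + b%:P) \Po ('X - (a + b)%:P) = 'X - a%:P.
Proof. by rewrite comp_polyD comp_polyX comp_polyC polyCD opprD addrA subrK. Qed.

Lemma horner_cstm (K : fieldType) (p q : {poly K}) :
  (map_poly (cstm K) p).[q%:F] = (p \Po q)%:F.
Proof. exact: horner_tofracC. Qed.

Lemma shift_rep (k K : fieldType) (iota : {rmorphism k -> K})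
  (alpha : {rmorphism K -> Kt K}) (hact : rational_Ga_action iota alpha)
  (h : K) (P Q : {poly K}) :
  coprimep P Q -> Q \is monic -> alpha h = P%:F / Q%:F ->
  map_poly alpha P = (map_poly (cstm K) P) \Po ('X + (tvar K)%:P)
  /\ map_poly alpha Q = (map_poly (cstm K) Q) \Po ('X + (tvar K)%:P).
Proof.
move=> cPQ mQ e.
have := hact.2.2 h P Q (monic_neq0 mQ) e.
have E : forall R : {poly K}, map_poly (@cst2 K) R
   = map_poly (fun c : Kt K => (c%:P)%:F) (map_poly (cstm K) R).
  by move=> R; rewrite -map_poly_comp_id0 ?rmorph0.
have T : tvar1 K + tvar2 K = ('X + (tvar K)%:P)%:F.
  by rewrite /tvar1 /tvar2 -tofracD addrC.
have E' : forall R : {poly K}, (map_poly (@cst2 K) R).[tvar1 K + tvar2 K]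
   = ((map_poly (cstm K) R) \Po ('X + (tvar K)%:P))%:F.
  by move=> R; rewrite E T horner_tofracC.
move=> e1.
have e2 := etrans e1 (congr2 (fun a b => a / b) (E' P) (E' Q)).
have s2 : size ('X + (tvar K)%:P) = 2 by rewrite size_XaddC.
have mon : forall R : {poly K}, R \is monic ->
    (map_poly (cstm K) R \Po ('X + (tvar K)%:P)) \is monic.
  move=> R mR; apply/monicP; rewrite lead_coef_comp ?s2 //.
  by rewrite lead_coefXaddC expr1n mulr1 (monicP (monic_map _ mR)).
have nz1 : map_poly alpha Q != 0 by rewrite map_poly_eq0 monic_neq0.
have e3 := proj1 (@frac_eq _ _ _ _ _ nz1 (monic_neq0 (mon _ mQ))) e2.
apply: uniq_rep e3.
- by rewrite coprimep_map.
- by apply: coprimep_comp_poly; rewrite coprimep_map.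
- by rewrite map_monic.
- exact: mon.
Qed.

Theorem mainTheorem2 (k K : fieldType) (iota : {rmorphism k -> K})
  (char0 : [pchar k] =i pred0)
  (hK : is_function_field iota)
  (alpha : {rmorphism K -> {fraction {poly K}}})
  (hact : rational_Ga_action iota alpha)
  (hnt : nontrivial_action alpha) :
  exists s : K,
    ~ algebraic_over (invariants alpha) s
    /\ alpha s = cst s + tvar K
    /\ (forall x : K, in_gen (fun y => invariants alpha y \/ y = s) x)
    /\ (forall p q : {poly K},
          (forall i, invariants alpha p`_i) -> (forall i, invariants alpha q`_i) ->
          q.[s] != 0 ->
          alpha (p.[s] / q.[s])
          = (map_poly (@cst K) p).[cst s + tvar K] / (map_poly (@cst K) q).[cst s + tvar K]).
Proof.
have [hcst [hred hcoc]] := hact.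
have c0 := (pcharf0P _).1 char0.
have nat_nz : forall n, ((n.+1)%:R : K) != 0.
  by move=> n; rewrite -(rmorph_nat iota) fmorph_eq0 c0.
have [h [P [Q [cPQ mQ sQ eh]]]] : exists h P Q,
    [/\ coprimep P Q, Q \is monic, (1 < size Q)%N & alpha h = P%:F / Q%:F].
  case: hnt => h0 hh0.
  have [P0 [Q0 [cP0 mQ0 e0]]] := @coprime_rep _ (alpha h0).
  case: (ltnP 1 (size Q0)) => sQ0; first by exists h0, P0, Q0.
  have Q01 : Q0 = 1.
    have [q eq] : exists q, Q0 = q%:P by exists Q0`_0; exact: size1_polyC.
    rewrite eq in mQ0 *.
    by move: mQ0 => /monicP; rewrite lead_coefC => ->.
  rewrite Q01 tofrac1 divr1 in e0.
  case: (ltnP 1 (size P0)) => sP0; last first.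
    have [P1 [Q1 [Q10 [e1 f1]]]] := hred h0.
    have Q1nz : Q1 != 0 by apply: contraNneq Q10 => ->; rewrite horner0.
    have e2 : ((P0`_0)%:P)%:F / (1 : {poly K})%:F = P1%:F / Q1%:F.
      by rewrite tofrac1 divr1 -[(P0`_0)%:P]size1_polyC // -e0.
    have := proj1 (@frac_eq _ _ _ _ _ (oner_neq0 _) Q1nz) e2.
    move/(congr1 (fun r => r.[0])); rewrite hornerM mulr1 hornerC => e3.
    have hh : h0 = P0`_0 by rewrite -f1 -e3 mulfK.
    move: hh0; rewrite e0 [P0]size1_polyC // hh eqxx //.
  have P0nz : P0 != 0 by rewrite -size_poly_eq0 -lt0n (ltn_trans _ sP0).
  have h0nz : h0 != 0.
    by apply: contraNneq hh0 => ->; rewrite rmorph0 /cst polyC0 rmorph0.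
  set l := lead_coef P0.
  have lnz : l != 0 by rewrite lead_coef_eq0.
  exists h0^-1, (l^-1%:P), (l^-1 *: P0); split.
  - rewrite coprimepZr ?invr_eq0 // -[l^-1%:P]mulr1 mul_polyC coprimepZl ?invr_eq0 //.
    exact: coprime1p.
  - by apply/monicP; rewrite lead_coefZ mulVf.
  - by rewrite size_scale ?invr_eq0.
  - rewrite fmorphV e0 -div1r -tofrac1.
    apply/frac_eq => //; first by rewrite scaler_eq0 negb_or invr_eq0 lnz.
    by rewrite mul1r mul_polyC.
have [_ hQ] := @shift_rep _ _ _ _ hact _ _ _ cPQ mQ eh.
have [m sQm] : exists m, size Q = m.+2.
  by exists (size Q).-2; case: (size Q) sQ => [|[|n]].
have ntnz : ((m.+1)%:R : Kt K) != 0.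
  by rewrite -(rmorph_nat (cstm K)) fmorph_eq0.
have hcoef : (map_poly alpha Q)`_m = (map_poly (cstm K) Q \Po ('X + (tvar K)%:P))`_m by rewrite hQ.
rewrite coef_map coef_comp_XaddC ?map_monic ?size_map_poly // coef_map in hcoef.
set s := Q`_m / (m.+1)%:R.
have hs : alpha s = cst s + tvar K.
  rewrite fmorph_div rmorph_nat hcoef cstE fmorph_div rmorph_nat.
  by rewrite mulrDl [_ * tvar K]mulrC mulfK.
have mp : forall p : {poly K}, (forall i, invariants alpha p`_i) -> map_poly alpha p = map_poly (@cst K) p.
  move=> p hp; apply/polyP => i; rewrite coef_map coef_map_id0; first exact: hp.
  by rewrite cstE rmorph0.
exists s; split; [|split; [exact: hs|split]].
- move=> [p [pnz [hp rp]]].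
  have e := congr1 alpha (rootP rp).
  rewrite rmorph0 -horner_map hs (mp p hp) map_cstE cstE in e.
  have T : cstm K s + tvar K = ('X + s%:P)%:F by rewrite /tvar rmorphD addrC.
  rewrite T horner_cstm in e.
  move/eqP: e; rewrite tofrac_eq0; apply/negP; rewrite -size_poly_eq0 size_comp_poly2 ?size_XaddC //.
  by rewrite size_poly_eq0.
- move=> f.
  have [P2 [Q2 [cPQ2 mQ2 ef]]] := @coprime_rep _ (alpha f).
  have [hP2 hQ2] := @shift_rep _ _ _ _ hact _ _ _ cPQ2 mQ2 ef.
  have [P1 [Q1 [Q10 [e1 f1]]]] := hred f.
  have Q1nz : Q1 != 0 by apply: contraNneq Q10 => ->; rewrite horner0.
  have cross := proj1 (@frac_eq _ _ _ _ _ (monic_neq0 mQ2) Q1nz) (etrans (esym ef) e1).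
  have dQ : Q2 %| Q1.
    have cQP : coprimep Q2 P2 by rewrite coprimep_sym.
    by rewrite -(Gauss_dvdpl _ cQP) mulrC cross dvdp_mull.
  have Q20 : Q2.[0] != 0.
    by move/dvdpP: dQ => [r hr]; move: Q10; rewrite hr hornerM mulf_eq0 negb_or => /andP[].
  have fE : f = P2.[0] / Q2.[0].
    by apply/eqP; rewrite -f1 eqr_div // -!hornerM cross.
  have inv_shift : forall R : {poly K},
      map_poly alpha R = (map_poly (cstm K) R) \Po ('X + (tvar K)%:P) ->
      forall i, invariants alpha (R \Po ('X - s%:P))`_i.
    move=> R hR i; rewrite /invariants -coef_map map_comp_poly hR map_polyXsubC hs -comp_polyA.
    rewrite (@cstE _ s) (@cstE _ ((R \Po _)`_i)) -(coef_map (cstm K)) map_comp_poly map_polyXsubC.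
    apply: (etrans (congr1 (fun r => (map_poly (cstm K) R \Po r)`_i) (@shiftX _ (cstm K s) (tvar K)))).
    reflexivity.
  have hP : P2.[0] = (P2 \Po ('X - s%:P)).[s] by rewrite horner_comp hornerXsubC subrr.
  have hQ' : Q2.[0] = (Q2 \Po ('X - s%:P)).[s] by rewrite horner_comp hornerXsubC subrr.
  rewrite fE hP hQ'; apply: gen_mul; [|apply: gen_inv]; apply: in_gen_horner; exact: inv_shift.
- move=> p q hp hq _.
  by rewrite fmorph_div -!horner_map hs (mp p hp) (mp q hq).
Qed.
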